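(* Let $c>0$, $\delta\ge1$, $\varepsilon\in(0,1-\frac1c)$, and let $\rho$ be a probability measure on $\mathbb R$ with $\int\log(1+s^2)\rho(\mathrm ds)<+\infty$. Then there exists $T_{\varepsilon,\rho}>0$ such that for every $T>T_{\varepsilon,\rho}$ there are constants $C_{T,\delta}>0$ (depending only on $T,\delta$) and $M_{T,\rho}\in(\varepsilon+\frac1c,1)$ (depending only on $T,\rho$), not depending on $x$, such that for all $x\in\mathbb R$, $$\exp\Big(-c\int_{\mathbb R}\tfrac12\log\big(\delta^2+(x-s)^2\big)\rho(\mathrm ds)\Big)\le (C_{T,\delta})^{cM_{T,\rho}}(x^2+\delta^2)^{-cM_{T,\rho}/2}.$$ *)

(* Defs.v *)
From HB Require Import structures.
From mathcomp Require Import all_boot all_order all_algebra.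
From mathcomp Require Import all_classical all_reals all_analysis.

(* Main.v *)
Require Import Defs.
From HB Require Import structures.
From mathcomp Require Import all_boot all_order all_algebra.
From mathcomp Require Import all_classical all_reals all_analysis.
From mathcomp Require Import measurable_realfun ring lra.
Import Order.TTheory GRing.Theory Num.Theory.
Local Open Scope ring_scope.
Local Open Scope classical_set_scope.

Lemma key_ineq (R : realType) (delta x s : R) : 1 <= delta ->
  ln (x ^+ 2 + delta ^+ 2) - ln 2 <=
  ln (delta ^+ 2 + (x - s) ^+ 2) + ln (1 + s ^+ 2).
Proof.
move=> hd.
have p1 : 0 < delta ^+ 2 + (x - s) ^+ 2.
  by have := sqr_ge0 (x - s); nra.
have p2 : 0 < 1 + s ^+ 2 by have := sqr_ge0 s; lra.
have p3 : 0 < x ^+ 2 + delta ^+ 2 by have := sqr_ge0 x; nra.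
have p4 : 0 < (delta ^+ 2 + (x - s) ^+ 2) * (1 + s ^+ 2) by exact: mulr_gt0.
rewrite -lnM ?posrE // lerBlDr -lnM ?posrE //.
have p5 : 0 < (delta ^+ 2 + (x - s) ^+ 2) * (1 + s ^+ 2) * 2 by nra.
rewrite ler_ln ?posrE //.
have h1 := sqr_ge0 (x - 2 * s).
have h2 := sqr_ge0 s.
have h3 : 0 <= (delta ^+ 2 - 1) * s ^+ 2 by apply: mulr_ge0 => //; nra.
have h4 : 0 <= s ^+ 2 * (x - s) ^+ 2 by apply: mulr_ge0; apply: sqr_ge0.
nra.
Qed.

Lemma meas_f (R : realType) (a b : R) :
  measurable_fun setT (fun s : R => (2^-1 * ln (a + (b - s) ^+ 2))%:E).
Proof.
apply/measurable_EFinP.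
apply: measurable_funM; first exact: measurable_cst.
refine (measurableT_comp (@measurable_ln R) _).
apply: measurable_funD; first exact: measurable_cst.
apply: measurable_funX; apply: measurable_funB; first exact: measurable_cst.
exact: measurable_id.
Qed.

Theorem lemma3p10 (R : realType) :
  exists (Cf : R -> R -> R) (Mf : R -> probability R R -> R),
  forall (c delta eps : R) (rho : probability R R),
    0 < c -> 1 <= delta -> 0 < eps -> eps < 1 - c^-1 ->
    (\int[rho]_(s in setT) (ln (1 + s ^+ 2))%:E < +oo)%E ->
    exists T0 : R, 0 < T0 /\
    forall T : R, T0 < T ->
      0 < Cf T delta /\ eps + c^-1 < Mf T rho /\ Mf T rho < 1 /\
      forall x : R,
        (expeR (- c%:E *
            \int[rho]_(s in setT) ((2^-1 * ln (delta ^+ 2 + (x - s) ^+ 2))%:E))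
         <= ((Cf T delta) `^ (c * Mf T rho)
              * (x ^+ 2 + delta ^+ 2) `^ (- (c * Mf T rho) / 2))%:E)%E.
Proof.
exists (fun T _ => expR (T * (T + 1) / 2)), (fun T _ => T / (T + 1)).
move=> c delta eps rho hc hd he hec hK.
pose J := (\int[rho]_(s in setT) (2^-1 * ln (1 + s ^+ 2))%:E)%E.
have J0 : (0 <= J)%E.
  apply: integral_ge0 => s _; rewrite lee_fin mulr_ge0 ?invr_ge0 //.
  by apply: ln_ge0; have := sqr_ge0 s; lra.
have JK : (J <= \int[rho]_(s in setT) (ln (1 + s ^+ 2))%:E)%E.
  apply: ge0_le_integral => //.
  - move=> s _; rewrite lee_fin mulr_ge0 ?invr_ge0 //.
    by apply: ln_ge0; have := sqr_ge0 s; lra.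
  - have := @meas_f R 1 0; apply: eq_measurable_fun => s _.
    by rewrite sub0r sqrrN.
  - apply/measurable_EFinP; apply: (measurableT_comp (@measurable_ln R)).
    apply: measurable_funD; first exact: measurable_cst.
    by apply: measurable_funX; exact: measurable_id.
  - move=> s _; rewrite lee_fin.
    have : 0 <= ln (1 + s ^+ 2) by apply: ln_ge0; have := sqr_ge0 s; lra.
    lra.
have Jfin : J = (fine J)%:E.
  by rewrite fineK // ge0_fin_numE // (le_lt_trans JK hK).
set j := fine J.
have j0 : 0 <= j by rewrite -lee_fin -Jfin.
pose d := 1 - eps - c^-1.
have d0 : 0 < d by rewrite /d; lra.
have l2 : 0 <= ln (2 : R) by apply: ln_ge0; lra.
exists (1 + ln 2 + 2 * j + d^-1); split.
  have : 0 < d^-1 by rewrite invr_gt0.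
  lra.
move=> T hT.
have dinv : 0 < d^-1 by rewrite invr_gt0.
have T1 : 1 < T by lra.
have Tp : 0 < T + 1 by lra.
have M1 : T / (T + 1) * (T + 1) = T by rewrite mulfVK // gt_eqF.
have M0 : 0 <= T / (T + 1) by rewrite divr_ge0 //; lra.
have Mlt : T / (T + 1) < 1 by rewrite ltr_pdivrMr //; lra.
split; first exact: expR_gt0.
split.
  have hdT : 1 < d * (T + 1).
    have h : d^-1 < T + 1 by lra.
    by rewrite -(ltr_pM2l d0) mulfV ?gt_eqF in h.
  have : eps + c^-1 = 1 - d by rewrite /d; lra.
  move=> ->; set M := T / (T + 1) in M1 *; nra.
split; first exact: Mlt.
move=> x.
set M := T / (T + 1) in M0 M1 Mlt *.
set I := (\int[rho]_(s in setT) _)%E.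
set L := ln (x ^+ 2 + delta ^+ 2).
have xd : 1 <= x ^+ 2 + delta ^+ 2 by have := sqr_ge0 x; nra.
have L0 : 0 <= L by exact: ln_ge0.
pose k := 2^-1 * (L - ln 2).
have I0 : (0 <= I)%E.
  apply: integral_ge0 => s _; rewrite lee_fin mulr_ge0 ?invr_ge0 //.
  by apply: ln_ge0; have := sqr_ge0 (x - s); nra.
have IJ : ((Num.max k 0)%:E <= I + J)%E.
  rewrite /I /J -ge0_integralD //; first last.
  - have := @meas_f R 1 0; apply: eq_measurable_fun => s _.
    by rewrite sub0r sqrrN.
  - move=> s _; rewrite lee_fin mulr_ge0 ?invr_ge0 //.
    by apply: ln_ge0; have := sqr_ge0 s; lra.
  - exact: meas_f.
  - move=> s _; rewrite lee_fin mulr_ge0 ?invr_ge0 //.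
    by apply: ln_ge0; have := sqr_ge0 (x - s); nra.
  have -> : ((Num.max k 0)%:E = \int[rho]_(s in setT) (cst (Num.max k 0)%:E) s)%E.
    rewrite integral_cst // -[X in X = _]mule1; congr (_ * _)%E; exact/esym/probability_setT.
  apply: ge0_le_integral => //.
  - by move=> s _; rewrite lee_fin le_max lexx orbT.
  - apply: emeasurable_funD; first exact: meas_f.
    have := @meas_f R 1 0; apply: eq_measurable_fun => s _.
    by rewrite sub0r sqrrN.
  move=> s _ /=; rewrite -EFinD lee_fin ge_max; apply/andP; split.
    have := @key_ineq R delta x s hd; rewrite /k /L; lra.
  have a1 : 0 <= ln (delta ^+ 2 + (x - s) ^+ 2).
    by apply: ln_ge0; have := sqr_ge0 (x - s); nra.
  have a2 : 0 <= ln (1 + s ^+ 2) by apply: ln_ge0; have := sqr_ge0 s; lra.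
  lra.
have Cp : 0 < expR (T * (T + 1) / 2) by exact: expR_gt0.
have xp : 0 < x ^+ 2 + delta ^+ 2 by lra.
rewrite /powR !gt_eqF // expRK -expRD.
move: I0 IJ; case: I => [r| |] //= I0 IJ.
- rewrite lee_fin ler_expR.
  move: IJ; rewrite Jfin -EFinD lee_fin ge_max => /andP [hk _].
  rewrite -/j in hk; rewrite -/L.
  have hr : k - j <= r by lra.
  have TT : ln 2 + 2 * j <= T * T by nra.
  have hML : 0 <= (1 - M) * L by apply: mulr_ge0 => //; lra.
  have key : - r <= T * T / 2 - M * L / 2.
    rewrite /k in hr; lra.
  have : c * (- r) <= c * (T * T / 2 - M * L / 2) by rewrite ler_pM2l.
  have e1 : c * M * (T * (T + 1) / 2) = c * (T * T) / 2.
    have -> : c * M * (T * (T + 1) / 2) = c * T * (M * (T + 1)) / 2 by ring.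
    by rewrite M1 mulrA.
  rewrite -/L; nra.
- by rewrite lt0_muley ?lte_fin ?oppr_lt0 //= lee_fin expR_ge0.
Qed.
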